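(* Let $\Delta>0$ and $B\ge0$. Suppose outcomes are observed under a balanced $K$-cluster randomized design $\mathcal{D}(\mathcal{C})$ and the potential outcomes have the form $Y_i(\mathbf{Z})=g_i(Z_i,e_i(\mathbf{Z}))$ where for all $i$, all $Z\in\{-1,1\}$ and all $e\in[-1,1]$: $|g_i(Z,e)-g_i(Z,Z)|=0$ if $|Z-e|<\Delta$, and $|g_i(Z,e)-g_i(Z,Z)|\le B$ otherwise. Then $$\left|\mathbb{E}[\widehat\tau_{DIM}]-\tau^*\right|\le\frac{2B}{N\Delta}\cdot\frac{K}{K-1}\,\mathcal{H}(\mathcal{C}),$$ where $\tau^*=\frac1N\sum_i\big(g_i(1,1)-g_i(-1,-1)\big)$.
   Context: Setting: $N$ experimental units $[N]$, $M$ interference units $[M]$, weights $w_{is}\ge0$ with $\sum_s w_{is}>0$ for all $i$ and $\sum_i w_{is}>0$ for all $s$. For $\mathbf{Z}\in\{-1,1\}^N$: dose $d_s=\frac{\sum_i w_{is}Z_i}{\sum_i w_{is}}$, exposure $e_i(\mathbf{Z})=\frac{\sum_s w_{is}d_s}{\sum_s w_{is}}\in[-1,1]$. Balanced $K$-cluster randomized design $\mathcal{D}(\mathcal{C})$: $K\ge2$ divides $N$, $\mathcal{C}$ partitions $[N]$ into $K$ clusters of size $N/K$, $\mathcal{C}(i)$ is the cluster of $i$; $K_T$ clusters ($0<K_T<K$) chosen uniformly at random are treated ($Z_i=1$), the rest are control ($Z_i=-1$). $N_T=NK_T/K$, $N_C=N-N_T$; $\widehat\tau_{DIM}=\frac{1}{N_T}\sum_{i:Z_i=1}Y_i-\frac{1}{N_C}\sum_{i:Z_i=-1}Y_i$.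 $\mathcal{H}(\mathcal{C})=\sum_{i\in[N]}\sum_{j\in[N]\setminus\mathcal{C}(i)}\sum_{s\in[M]}\frac{w_{is}}{\sum_{s'} w_{is'}}\frac{w_{js}}{\sum_{k} w_{ks}}$. *)

(* Defs.v *)
From HB Require Import structures.
From mathcomp Require Import all_boot all_order all_algebra.
From mathcomp Require Import reals.
Set Implicit Arguments. Unset Strict Implicit. Unset Printing Implicit Defensive.
Import Order.TTheory GRing.Theory Num.Theory.
Local Open Scope ring_scope.

Section Defs.
Variables (R : realType) (N M K : nat).
Variable w : 'I_N -> 'I_M -> R.
Variable c : 'I_N -> 'I_K.

Definition dose (Z : 'I_N -> R) (s : 'I_M) : R :=
  (\sum_(i < N) w i s * Z i) / (\sum_(i < N) w i s).

Definition exposure (Z : 'I_N -> R) (i : 'I_N) : R :=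
  (\sum_(s < M) w i s * dose Z s) / (\sum_(s < M) w i s).

Definition Zof (T : {set 'I_K}) (i : 'I_N) : R := if c i \in T then 1 else -1.

Definition Yobs (g : 'I_N -> R -> R -> R) (Z : 'I_N -> R) (i : 'I_N) : R :=
  g i (Z i) (exposure Z i).

Definition tauDIM (KT : nat) (g : 'I_N -> R -> R -> R) (T : {set 'I_K}) : R :=
  let Z := Zof T in
  let NT := N%:R * KT%:R / K%:R in
  let NC := N%:R - NT in
  (\sum_(i < N | Z i == 1) Yobs g Z i) / NT
  - (\sum_(i < N | Z i == -1) Yobs g Z i) / NC.

(* expectation over the balanced K-cluster design: K_T clusters chosen
   uniformly at random among all subsets of size K_T *)
Definition designE (KT : nat) (f : {set 'I_K} -> R) : R :=
  (\sum_(T : {set 'I_K} | #|T| == KT) f T) / #|[set T : {set 'I_K} | #|T| == KT]|%:R.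

Definition tau_star (g : 'I_N -> R -> R -> R) : R :=
  N%:R^-1 * \sum_(i < N) (g i 1 1 - g i (-1) (-1)).

Definition Hcal : R :=
  \sum_(i < N) \sum_(j < N | c j != c i) \sum_(s < M)
     (w i s / (\sum_(s' < M) w i s')) * (w j s / (\sum_(k < N) w k s)).
End Defs.

(* Main.v *)
Require Import Defs.
From HB Require Import structures.
From mathcomp Require Import all_boot all_order all_algebra.
From mathcomp Require Import reals.
From mathcomp Require Import all_fingroup ring lra.
Import Order.TTheory GRing.Theory Num.Theory.
Local Open Scope ring_scope.


Section Aux.
Variables (R : realFieldType) (K KT : nat).

Definition sumT (F : {set 'I_K} -> R) := \sum_(T : {set 'I_K} | #|T| == KT) F T.

Lemma sumT_perm (s : {perm 'I_K}) F : sumT F = sumT (fun T => F (s @: T)).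
Proof.
rewrite /sumT (reindex_inj (imset_inj (@perm_inj _ s))) /=.
by apply: eq_bigl => T; rewrite card_imset //; apply: perm_inj.
Qed.

Lemma sum_ind (T : {set 'I_K}) : \sum_(l < K) ((l \in T)%:R : R) = #|T|%:R.
Proof.
rewrite -sum1_card natr_sum [RHS]big_mkcond /=; apply: eq_bigr => l _.
by case: (l \in T).
Qed.

Lemma sum_nind (T : {set 'I_K}) :
  \sum_(l < K) ((l \notin T)%:R : R) = K%:R - #|T|%:R.
Proof.
rewrite -sum_ind -[K in K%:R]card_ord -sum1_card natr_sum -sumrB.
by apply: eq_bigr => l _; case: (l \in T) => /=; rewrite ?subr0 ?subrr.
Qed.

Lemma sumT_const_in k l :
  sumT (fun T => (l \in T)%:R) = sumT (fun T => (k \in T)%:R).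
Proof.
rewrite (sumT_perm (tperm k l)); apply: eq_bigr => T _.
by rewrite -{1}(tpermL k l) mem_imset //; apply: perm_inj.
Qed.

Lemma factA k : K%:R * sumT (fun T => (k \in T)%:R) = KT%:R * sumT (fun _ => 1).
Proof.
have -> : K%:R * sumT (fun T => (k \in T)%:R) =
   \sum_(l < K) sumT (fun T => (l \in T)%:R).
  rewrite (eq_bigr (fun _ => sumT (fun T => (k \in T)%:R))); last first.
    by move=> l _; apply: sumT_const_in.
  by rewrite sumr_const card_ord mulr_natl.
rewrite /sumT exchange_big /= mulr_sumr; apply: eq_bigr => T /eqP HT.
by rewrite sum_ind HT mulr1.
Qed.

Lemma factB k l : k != l ->
  (K%:R - 1) * sumT (fun T => (k \in T)%:R * (l \notin T)%:R)
  = (K%:R - KT%:R) * sumT (fun T => (k \in T)%:R).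
Proof.
move=> kl.
pose h l' := sumT (fun T => (k \in T)%:R * (l' \notin T)%:R).
have hc : forall l', l' != k -> h l' = h l.
  move=> l' l'k; rewrite /h (sumT_perm (tperm l l')); apply: eq_bigr => T _.
  have e : tperm l l' k = k by rewrite tpermD // eq_sym.
  rewrite -{1}e mem_imset; last exact: perm_inj.
  by rewrite -{1}(tpermL l l') mem_imset //; apply: perm_inj.
have hk : h k = 0.
  by rewrite /h /sumT big1 // => T _; case: (k \in T); rewrite ?mulr0 ?mul0r.
have e1 : \sum_(l' < K) h l' = (K%:R - 1) * h l.
  rewrite (bigD1 k) //= hk add0r.
  rewrite (eq_bigr (fun _ => h l * 1)); last by move=> l' Hl; rewrite mulr1 hc.
  rewrite -mulr_sumr mulrC; congr (_ * _).
  have : \sum_(l' < K) (1 : R) = K%:R by rewrite sumr_const card_ord.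
  by rewrite (bigD1 k) //= => <-; rewrite addrC addrK.
rewrite -/(h l) -e1 /h /sumT exchange_big /= mulr_sumr.
apply: eq_bigr => T /eqP HT.
by rewrite -mulr_sumr sum_nind HT mulrC.
Qed.

Lemma sumT1 : sumT (fun _ => 1) = #|[set T : {set 'I_K} | #|T| == KT]|%:R.
Proof. by rewrite cardsE -sum1_card natr_sum. Qed.

Lemma sumT_pos : (KT <= K)%N -> 0 < sumT (fun _ => 1).
Proof.
by move=> hk; rewrite sumT1 card_draws card_ord ltr0n bin_gt0.
Qed.
End Aux.
Arguments sumT {R K} KT F.



Lemma hval (R : realFieldType) K KT (k l : 'I_K) : (1 < K)%N ->
  sumT KT (fun T => ((k \in T)%:R : R) * (l \notin T)%:R) =
  if k == l then 0 else
  (K%:R - KT%:R) * KT%:R * sumT (R:=R) (K:=K) KT (fun _ => 1) / ((K%:R - 1) * K%:R).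
Proof.
move=> hK; case: eqP => [->|/eqP kl].
  by rewrite /sumT big1 // => T _; case: (l \in T); rewrite ?mulr0 ?mul0r.
have hK0 : (K%:R : R) != 0 by rewrite pnatr_eq0 -lt0n; apply: ltn_trans hK.
have hK1 : (K%:R : R) - 1 != 0.
  by rewrite subr_eq0 pnatr_eq1; apply/eqP => e; rewrite e in hK.
have := factB R K KT k l kl; have := factA R K KT k.
move=> hA hB; apply: (mulfI hK1); rewrite hB.
have hF : sumT KT (fun T : {set 'I_K} => ((k \in T)%:R : R)) =
   KT%:R * sumT (R:=R) (K:=K) KT (fun _ => 1) / K%:R.
  by apply: (mulfI hK0); rewrite hA; field.
by rewrite hF; field; rewrite hK0 hK1.
Qed.

Lemma avg (R : realFieldType) (I : finType) (a x : I -> R) t :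
  \sum_k a k != 0 ->
  1 - t * ((\sum_k a k * x k) / \sum_k a k) =
  \sum_k (a k / \sum_k a k) * (1 - t * x k).
Proof.
move=> h; symmetry.
under eq_bigr => k _ do rewrite mulrBr mulr1.
rewrite sumrB -mulr_suml divff //; congr (_ - _).
rewrite mulr_suml mulr_sumr; apply: eq_bigr => k _; ring.
Qed.

Section Expo.
Variables (R : realType) (N M K : nat) (w : 'I_N -> 'I_M -> R) (c : 'I_N -> 'I_K).

Lemma expo_form t T i :
  (forall i, 0 < \sum_(s < M) w i s) ->
  (forall s, 0 < \sum_(i < N) w i s) ->
  1 - t * exposure w (Zof R c T) i =
  \sum_(j < N) \sum_(s < M) (w i s / (\sum_(s' < M) w i s')) *
     (w j s / (\sum_(k < N) w k s)) * (1 - t * Zof R c T j).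
Proof.
move=> hWi hWs; rewrite /exposure avg; last by rewrite gt_eqF.
rewrite exchange_big /=; apply: eq_bigr => s _.
rewrite /dose avg; last by rewrite gt_eqF.
rewrite mulr_sumr; apply: eq_bigr => j _; by rewrite mulrA.
Qed.

Lemma Zof_cases T j : Zof R c T j = 1 /\ c j \in T \/ Zof R c T j = -1 /\ c j \notin T.
Proof. by rewrite /Zof; case: (c j \in T); [left|right]. Qed.

Lemma expo_range T i :
  (forall i s, 0 <= w i s) ->
  (forall i, 0 < \sum_(s < M) w i s) ->
  (forall s, 0 < \sum_(i < N) w i s) ->
  -1 <= exposure w (Zof R c T) i <= 1.
Proof.
move=> hw hWi hWs.
have pos : forall t : R, (t = 1 \/ t = -1) -> 0 <= 1 - t * exposure w (Zof R c T) i.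
  move=> t ht; rewrite expo_form //; apply: sumr_ge0 => j _; apply: sumr_ge0 => s _.
  apply: mulr_ge0; first by apply: mulr_ge0; apply: divr_ge0 => //; apply: ltW.
  by case: (Zof_cases T j) => -[-> _]; case: ht => ->; lra.
have := pos 1 (or_introl erefl); have := pos (-1) (or_intror erefl).
move=> h1 h2; apply/andP; split; lra.
Qed.
End Expo.



Lemma gbound (R : realType) N (g : 'I_N -> R -> R -> R) (Delta B : R) i z e :
  0 < Delta -> 0 <= B ->
  (forall (i : 'I_N) (z e : R), (z = 1 \/ z = -1) -> -1 <= e <= 1 ->
     (`|z - e| < Delta -> `|g i z e - g i z z| = 0) /\
     (Delta <= `|z - e| -> `|g i z e - g i z z| <= B)) ->
  (z = 1 \/ z = -1) -> -1 <= e <= 1 ->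
  `|g i z e - g i z z| <= B / Delta * (1 - z * e).
Proof.
move=> hD hB hg hz he.
have hze : `|z - e| = 1 - z * e.
  case/andP: he => he1 he2.
  by case: hz => ->; [rewrite ger0_norm; lra | rewrite ler0_norm; lra].
have hBD : 0 <= B / Delta by apply: divr_ge0 => //; apply: ltW.
case: (ltrP `|z - e| Delta) => h.
  rewrite ((hg i z e hz he).1 h); apply: mulr_ge0 => //.
  by rewrite -hze.
apply: le_trans ((hg i z e hz he).2 h) _.
rewrite -hze.
have : B / Delta * Delta <= B / Delta * `|z - e| by apply: ler_wpM2l.
by rewrite divfK // gt_eqF.
Qed.

Section Bound.
Variables (R : realType) (N M K KT : nat) (w : 'I_N -> 'I_M -> R) (c : 'I_N -> 'I_K)
  (g : 'I_N -> R -> R -> R) (Delta B : R).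

Lemma bound_gen i z (P : {set 'I_K} -> bool) (Q : 'I_N -> {set 'I_K} -> bool) :
  (forall i s, 0 <= w i s) ->
  (forall i, 0 < \sum_(s < M) w i s) ->
  (forall s, 0 < \sum_(i < N) w i s) ->
  0 < Delta -> 0 <= B ->
  (forall (i : 'I_N) (z e : R), (z = 1 \/ z = -1) -> -1 <= e <= 1 ->
     (`|z - e| < Delta -> `|g i z e - g i z z| = 0) /\
     (Delta <= `|z - e| -> `|g i z e - g i z z| <= B)) ->
  (z = 1 \/ z = -1) ->
  (forall T, P T -> Zof R c T i = z) ->
  (forall T j, 1 - z * Zof R c T j = 2 * (Q j T)%:R) ->
  `|sumT KT (fun T => (P T)%:R *
       (g i (Zof R c T i) (exposure w (Zof R c T) i) - g i z z))|
   <= B / Delta * 2 * \sum_(j < N) \sum_(s < M)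
      (w i s / (\sum_(s' < M) w i s')) * (w j s / (\sum_(k < N) w k s)) *
      sumT KT (fun T => (P T)%:R * (Q j T)%:R).
Proof.
move=> hw hWi hWs hD hB hg hz hP hQ.
apply: le_trans (ler_norm_sum _ _ _) _.
apply: (@le_trans _ _ (sumT KT (fun T => (P T)%:R *
    (B / Delta * (1 - z * exposure w (Zof R c T) i))))).
  apply: ler_sum => T _; case hPT: (P T); last by rewrite !mul0r normr0.
  rewrite !mul1r hP //; apply: gbound => //.
  exact: expo_range.
rewrite le_eqVlt; apply/orP; left; apply/eqP.
transitivity (\sum_(T : {set 'I_K} | #|T| == KT) \sum_(j < N) \sum_(s < M)
   B / Delta * 2 * ((w i s / (\sum_(s' < M) w i s')) * (w j s / (\sum_(k < N) w k s)) *
     ((P T)%:R * (Q j T)%:R))).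
  apply: eq_bigr => T _; rewrite expo_form // !mulr_sumr; apply: eq_bigr => j _.
  rewrite !mulr_sumr; apply: eq_bigr => s _; rewrite hQ; ring.
rewrite exchange_big /= mulr_sumr; apply: eq_bigr => j _.
rewrite exchange_big /= mulr_sumr; apply: eq_bigr => s _.
by rewrite /sumT !mulr_sumr.
Qed.
End Bound.



Lemma sum_filterZ (R : realType) N K (c : 'I_N -> 'I_K) T (F : 'I_N -> R) :
  (\sum_(i < N | Zof R c T i == 1) F i = \sum_(i < N) (c i \in T)%:R * F i) /\
  (\sum_(i < N | Zof R c T i == -1) F i = \sum_(i < N) (c i \notin T)%:R * F i).
Proof.
have h : (-1 : R) != 1 by apply/eqP; lra.
split; rewrite big_mkcond /=; apply: eq_bigr => i _; rewrite /Zof;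
  case: (c i \in T); rewrite ?eqxx ?(negbTE h) ?mul1r ?mul0r //.
by rewrite eq_sym (negbTE h).
Qed.

Theorem lemma4 (R : realType) (N M K KT : nat)
  (w : 'I_N -> 'I_M -> R) (c : 'I_N -> 'I_K)
  (g : 'I_N -> R -> R -> R) (Delta B : R) :
  (forall i s, 0 <= w i s) ->
  (forall i, 0 < \sum_(s < M) w i s) ->
  (forall s, 0 < \sum_(i < N) w i s) ->
  (2 <= K)%N -> (0 < N)%N -> (K %| N)%N ->
  (forall k : 'I_K, #|[set i | c i == k]| = (N %/ K)%N) ->
  (0 < KT)%N -> (KT < K)%N ->
  0 < Delta -> 0 <= B ->
  (forall (i : 'I_N) (z e : R), (z = 1 \/ z = -1) -> -1 <= e <= 1 ->
     (`|z - e| < Delta -> `|g i z e - g i z z| = 0) /\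
     (Delta <= `|z - e| -> `|g i z e - g i z z| <= B)) ->
  `|designE KT (tauDIM w c KT g) - tau_star g|
    <= (2 * B) / (N%:R * Delta) * (K%:R / (K%:R - 1)) * Hcal w c.
Proof.
move=> hw hWi hWs hK hN hdiv hbal hKT0 hKTK hD hB hg.
set C := sumT (R:=R) (K:=K) KT (fun _ => 1).
have hC : 0 < C by apply: sumT_pos; apply: ltnW.
have hC0 : C != 0 by rewrite gt_eqF.
have hK0 : (K%:R : R) != 0 by rewrite pnatr_eq0 -lt0n; apply: ltn_trans hK.
have hK1 : 0 < (K%:R : R) - 1.
  by rewrite subr_gt0 (_ : 1 = 1%:R) // ltr_nat.
have hKT : 0 < (KT%:R : R) by rewrite ltr0n.
have hKKT : 0 < (K%:R : R) - KT%:R by rewrite subr_gt0 ltr_nat.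
have hN0 : 0 < (N%:R : R) by rewrite ltr0n.
pose e T i := exposure w (Zof R c T) i.
pose Ai i := sumT KT (fun T => (c i \in T)%:R * (g i (Zof R c T i) (e T i) - g i 1 1)).
pose Bi i := sumT KT (fun T => (c i \notin T)%:R *
                (g i (Zof R c T i) (e T i) - g i (-1) (-1))).
pose q := (K%:R - KT%:R) * KT%:R * C / ((K%:R - 1) * K%:R).
pose Hi i := \sum_(j < N | c j != c i) \sum_(s < M)
     (w i s / (\sum_(s' < M) w i s')) * (w j s / (\sum_(k < N) w k s)).
have hF : forall k, sumT KT (fun T : {set 'I_K} => ((k \in T)%:R : R)) = KT%:R * C / K%:R.
  by move=> k; apply: (mulfI hK0); rewrite factA -/C; field.
have hF' : forall k, sumT KT (fun T : {set 'I_K} => ((k \notin T)%:R : R)) = C - KT%:R * C / K%:R.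
  move=> k; rewrite -(hF k) /C /sumT -sumrB; apply: eq_bigr => T _.
  by case: (k \in T); rewrite /= ?subrr ?subr0.
have step1 : designE KT (tauDIM w c KT g) - tau_star g =
   \sum_(i < N) N%:R^-1 * (Ai i * K%:R / (KT%:R * C) - Bi i * K%:R / ((K%:R - KT%:R) * C)).
  rewrite /designE -(sumT1 R K KT) -/C.
  have htau : forall T, tauDIM w c KT g T = \sum_(i < N)
     ((c i \in T)%:R * Yobs w g (Zof R c T) i / (N%:R * KT%:R / K%:R) -
      (c i \notin T)%:R * Yobs w g (Zof R c T) i / (N%:R - N%:R * KT%:R / K%:R)).
    move=> T; rewrite /tauDIM /=.
    case: (sum_filterZ R N K c T (Yobs w g (Zof R c T))) => -> ->.
    by rewrite sumrB !mulr_suml.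
  rewrite (eq_bigr _ (fun T _ => htau T)) exchange_big /= mulr_suml /tau_star mulr_sumr -sumrB.
  apply: eq_bigr => i _.
  rewrite sumrB -!mulr_suml.
  have hX : \sum_(T : {set 'I_K} | #|T| == KT) (c i \in T)%:R * Yobs w g (Zof R c T) i
      = Ai i + g i 1 1 * (KT%:R * C / K%:R).
    rewrite -(hF (c i)) mulr_sumr /Ai /sumT -big_split; apply: eq_bigr => T _.
    by rewrite /Yobs /e /=; ring.
  have hY : \sum_(T : {set 'I_K} | #|T| == KT) (c i \notin T)%:R * Yobs w g (Zof R c T) i
      = Bi i + g i (-1) (-1) * (C - KT%:R * C / K%:R).
    rewrite -(hF' (c i)) mulr_sumr /Bi /sumT -big_split; apply: eq_bigr => T _.
    by rewrite /Yobs /e /=; ring.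
  rewrite hX hY; field.
  by rewrite hC0 (gt_eqF hKKT) (gt_eqF hKT) (gt_eqF hN0) hK0 -mulrBr
    mulf_neq0 // ?(gt_eqF hN0) ?(gt_eqF hKKT).
have hsum : forall i (h : 'I_N -> R),
    (forall j, h j = if c i == c j then 0 else q) ->
    \sum_(j < N) \sum_(s < M)
      (w i s / (\sum_(s' < M) w i s')) * (w j s / (\sum_(k < N) w k s)) * h j
    = Hi i * q.
  move=> i h hh; rewrite /Hi mulr_suml [RHS]big_mkcond /=; apply: eq_bigr => j _.
  rewrite hh eq_sym; case: eqP => _ /=.
    by rewrite big1 // => s _; rewrite mulr0.
  by rewrite mulr_suml.
have hA : forall i, `|Ai i| <= B / Delta * 2 * (Hi i * q).
  move=> i; rewrite /Ai.
  have := bound_gen R N M K KT w c g Delta B i 1 (fun T => c i \in T)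
    (fun j T => c j \notin T) hw hWi hWs hD hB hg (or_introl erefl).
  move=> H; apply: le_trans (H _ _) _.
  - by move=> T /= h; rewrite /Zof h.
  - by move=> T j; rewrite /Zof; case: (c j \in T) => /=; ring.
  rewrite le_eqVlt; apply/orP; left; apply/eqP; congr (_ * _).
  apply: hsum => j; rewrite hval //.
have hBi : forall i, `|Bi i| <= B / Delta * 2 * (Hi i * q).
  move=> i; rewrite /Bi.
  have := bound_gen R N M K KT w c g Delta B i (-1) (fun T => c i \notin T)
    (fun j T => c j \in T) hw hWi hWs hD hB hg (or_intror erefl).
  move=> H; apply: le_trans (H _ _) _.
  - by move=> T /= h; rewrite /Zof (negbTE h).
  - by move=> T j; rewrite /Zof; case: (c j \in T) => /=; ring.
  rewrite le_eqVlt; apply/orP; left; apply/eqP; congr (_ * _).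
  apply: hsum => j.
  rewrite (_ : sumT _ _ = sumT KT (fun T => ((c j \in T)%:R : R) * (c i \notin T)%:R)).
    by rewrite hval // eq_sym.
  by apply: eq_bigr => T _; rewrite mulrC.
rewrite step1; apply: le_trans (ler_norm_sum _ _ _) _.
rewrite /Hcal [leRHS]mulr_sumr; apply: ler_sum => i _.
rewrite -/(Hi i).
have hu : 0 <= K%:R / (KT%:R * C).
  by apply: divr_ge0; [apply: ler0n | apply: mulr_ge0; apply: ltW].
have hv : 0 <= K%:R / ((K%:R - KT%:R) * C).
  by apply: divr_ge0; [apply: ler0n | apply: mulr_ge0; apply: ltW].
rewrite normrM ger0_norm; last by rewrite invr_ge0 ltW.
apply: (@le_trans _ _ (N%:R^-1 * (B / Delta * 2 * (Hi i * q) * (K%:R / (KT%:R * C))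
   + B / Delta * 2 * (Hi i * q) * (K%:R / ((K%:R - KT%:R) * C))))).
  apply: ler_wpM2l; first by rewrite invr_ge0 ltW.
  apply: le_trans (ler_normB _ _) _.
  apply: lerD.
    by rewrite -mulrA normrM (ger0_norm hu); apply: ler_wpM2r.
  by rewrite -mulrA normrM (ger0_norm hv); apply: ler_wpM2r.
rewrite le_eqVlt; apply/orP; left; apply/eqP.
rewrite /q; field.
by rewrite (gt_eqF hK1) (gt_eqF hD) (gt_eqF hN0) hC0 (gt_eqF hKKT) hK0 (gt_eqF hKT).
Qed.
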